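(* Let $n\ge 7$ and let $T_n^1(3,3)$ be the graph obtained from two vertex-disjoint triangles $v_1v_2v_3$ and $w_1w_2w_3$ joined by the edge $v_3w_1$, by attaching $n-6$ pendant edges (new leaves) to $v_3$. Then \[ \operatorname{avm}(T_n^1(3,3))=3-\frac{6}{3n-11}. \]
   Context: $\operatorname{avm}(G)$ is the average of $|M|$ over all maximal matchings $M$ of $G$ (a matching is maximal if not properly contained in another matching). *)

(* Defs.v *)
From mathcomp Require Import all_boot all_order all_algebra.
Set Implicit Arguments. Unset Strict Implicit. Unset Printing Implicit Defensive.
Import GRing.Theory Num.Theory.

(* A simple graph on a finType T is given by a symmetric irreflexive rel e.
   Its edges are the 2-element vertex sets {x,y} with e x y. *)
Definition edges (T : finType) (e : rel T) : {set {set T}} :=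
  [set [set x; y] | x in T, y in T & e x y].

Definition is_matching (T : finType) (e : rel T) (M : {set {set T}}) : bool :=
  (M \subset edges e) &&
  [forall A in M, forall B in M, (A != B) ==> [disjoint A & B]].

Definition is_maximal_matching (T : finType) (e : rel T) (M : {set {set T}}) : bool :=
  is_matching e M &&
  [forall N : {set {set T}}, (M \proper N) ==> ~~ is_matching e N].

Definition avm (T : finType) (e : rel T) : rat :=
  ((\sum_(M : {set {set T}} | is_maximal_matching e M) #|M|)%:R /
   #|[set M : {set {set T}} | is_maximal_matching e M]|%:R)%R.

(* T_n^1(3,3) on vertices 0..n-1:
   v1 = 0, v2 = 1, v3 = 2, w1 = 3, w2 = 4, w3 = 5, leaves 6..n-1 attached to v3. *)
Definition T1_33_base (a b : nat) : bool :=
  [|| (a == 0) && (b == 1), (a == 0) && (b == 2), (a == 1) && (b == 2),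
      (a == 3) && (b == 4), (a == 3) && (b == 5), (a == 4) && (b == 5),
      (a == 2) && (b == 3) | (a == 2) && (6 <= b)].

Definition T1_33 (n : nat) : rel 'I_n :=
  fun x y => T1_33_base x y || T1_33_base y x.
Arguments T1_33 n : clear implicits.

(* Main.v *)
Require Import Defs.
From mathcomp Require Import all_boot all_order all_algebra zify ring lra.
Import GRing.Theory Num.Theory.
Set Implicit Arguments. Unset Strict Implicit.

Definition V m (a : nat) : 'I_(m.+4.+3) := inord a.
Definition E m a b : {set 'I_(m.+4.+3)} := [set V m a; V m b].
Notation G m := (T1_33 (m.+4.+3)).

Lemma val_V m a : a < m.+4.+3 -> val (V m a) = a.
Proof. by move=> h; rewrite /V /= inordK. Qed.

Lemma base_lt a b : T1_33_base a b -> a < b.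
Proof. rewrite /T1_33_base; lia. Qed.

Lemma memE m (z : 'I_(m.+4.+3)) a b : a < m.+4.+3 -> b < m.+4.+3 ->
  (z \in E m a b) = (val z == a) || (val z == b).
Proof.
move=> ha hb; rewrite !inE -!val_eqE /= !val_V //.
Qed.

Lemma edgesP m A : reflect (exists a b, [/\ T1_33_base a b, b < m.+4.+3 & A = E m a b])
  (A \in edges (G m)).
Proof.
apply: (iffP imset2P).
- case=> x y _; rewrite inE /= => hxy ->.
  case/orP: hxy => h.
  + exists (nat_of_ord x), (nat_of_ord y); split => //; rewrite /E /V !inord_val //.
  + exists (nat_of_ord y), (nat_of_ord x); split => //; rewrite /E /V !inord_val setUC //.
- case=> a [b [hb lb ->]]; have la : a < m.+4.+3 by have := base_lt hb; lia.
  apply: (Imset2spec (x1:=V m a) (x2:=V m b)) => //; rewrite inE /T1_33 /= !val_V // hb //.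
Qed.

Lemma disjE m a b c d : a < m.+4.+3 -> b < m.+4.+3 -> c < m.+4.+3 -> d < m.+4.+3 ->
  [disjoint E m a b & E m c d] = [&& a != c, a != d, b != c & b != d].
Proof.
move=> ha hb hc hd.
case H: [&& _, _, _ & _].
- rewrite disjoint_subset; apply/subsetP => z; rewrite [z \in [predC _]]inE !memE //; lia.
- apply/negbTE/negP => D.
  have h1 : V m a \in E m a b by rewrite memE // val_V // eqxx.
  have h2 : V m b \in E m a b by rewrite memE // val_V // eqxx orbT.
  have := disjointFr D h1; have := disjointFr D h2; rewrite !memE // !val_V //; lia.
Qed.

Lemma eqE m a b c d : a < b -> c < d -> b < m.+4.+3 -> d < m.+4.+3 ->
  (E m a b == E m c d) = (a == c) && (b == d).
Proof.
move=> hab hcd hb hd.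
case H: ((a == c) && (b == d)).
- by move/andP: H => [/eqP-> /eqP->]; rewrite eqxx.
- apply/negbTE/negP => /eqP D.
  have : (V m a \in E m a b) = (V m a \in E m c d) by rewrite D.
  have : (V m b \in E m a b) = (V m b \in E m c d) by rewrite D.
  have : (V m c \in E m a b) = (V m c \in E m c d) by rewrite D.
  have : (V m d \in E m a b) = (V m d \in E m c d) by rewrite D.
  rewrite !memE ?val_V //; try lia.
Qed.

Lemma matchingP (T : finType) (e : rel T) (M : {set {set T}}) :
  reflect ({subset M <= edges e} /\ forall A B, A \in M -> B \in M -> A != B -> [disjoint A & B])
    (is_matching e M).
Proof.
apply: (iffP andP) => [[/subsetP h /forallP h2]|[h h2]]; split => //.
- move=> A B hA hB; have /implyP := h2 A; move=> /(_ hA) /forallP /(_ B) /implyP /(_ hB) /implyP; exact.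
- exact/subsetP.
- apply/forallP => A; apply/implyP => hA; apply/forallP => B; apply/implyP => hB; apply/implyP; exact: h2.
Qed.

Lemma edge_mem (T : finType) (e : rel T) f : f \in edges e -> exists x, x \in f.
Proof. by case/imset2P => x y _ _ ->; exists x; rewrite !inE eqxx. Qed.

Lemma maxP (T : finType) (e : rel T) (M : {set {set T}}) :
  is_maximal_matching e M <->
  is_matching e M /\ (forall f, f \in edges e -> exists2 A, A \in M & ~~ [disjoint A & f]).
Proof.
split.
- case/andP => hM /forallP hN; split => // f hf.
  case/matchingP: (hM) => hs hd.
  case: (boolP [exists A in M, ~~ [disjoint A & f]]) => [/exists_inP //|/exists_inPn H0].
  have H : forall A, A \in M -> [disjoint A & f] by move=> A /H0 /negPn.
  exfalso.
  have fM : f \notin M.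
    apply/negP => fM; have := H f fM; case: (edge_mem hf) => x hx.
    by move/disjointFr => /(_ x hx); rewrite hx.
  have := hN (f |: M); rewrite properUr ?sub1set // => /negP; apply.
  apply/matchingP; split.
  + move=> A; rewrite in_setU1 => /orP [/eqP -> //|]; exact: hs.
  + move=> A B; rewrite !in_setU1 => /orP [/eqP ->|hA] /orP [/eqP ->|hB].
    * by rewrite eqxx.
    * by move=> _; rewrite disjoint_sym; apply: H.
    * by move=> _; apply: H.
    * exact: hd.
- case=> hM hf; apply/andP; split => //; apply/forallP => N; apply/implyP => hMN.
  apply/negP => /matchingP [hs hd].
  case/properP: hMN => /subsetP sub [f fN fM].
  case: (hf f (hs f fN)) => A AM /negP; apply.
  apply: hd => //; first exact: sub.
  by apply/eqP => Af; rewrite -Af AM in fM.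
Qed.

Definition wa (t : 'I_3) : nat := if val t == 2 then 4 else 3.
Definition wb (t : 'I_3) : nat := if val t == 0 then 4 else 5.
Definition idx m := (('I_2 * 'I_3) + (unit + ('I_(m.+1) * 'I_3)))%type.
Definition phi m (i : idx m) : {set {set 'I_(m.+4.+3)}} :=
  match i with
  | inl (j, t) => [set E m j 2; E m (wa t) (wb t)]
  | inr (inl _) => [set E m 2 3; E m 0 1; E m 4 5]
  | inr (inr (l, t)) => [set E m 2 (l + 6); E m 0 1; E m (wa t) (wb t)]
  end.

Lemma ex2_2 (T : finType) (A B f : {set T}) :
  ~~[disjoint A & f] || ~~[disjoint B & f] -> exists2 C, C \in [set A; B] & ~~ [disjoint C & f].
Proof. by case/orP => h; [exists A | exists B]; rewrite // !inE eqxx ?orbT. Qed.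

Lemma ex2_3 (T : finType) (A B D f : {set T}) :
  [|| ~~[disjoint A & f], ~~[disjoint B & f] | ~~[disjoint D & f]] ->
  exists2 C, C \in [set A; B; D] & ~~ [disjoint C & f].
Proof. by case/or3P => h; [exists A | exists B | exists D]; rewrite // !inE eqxx ?orbT. Qed.

Lemma in3P (T : finType) (A a b c : {set T}) :
  A \in [set a; b; c] -> [\/ A = a, A = b | A = c].
Proof. by rewrite !inE => /orP [/orP [/eqP->|/eqP->]|/eqP->]; [apply: Or31|apply: Or32|apply: Or33]. Qed.

Lemma in2P (T : finType) (A a b : {set T}) :
  A \in [set a; b] -> A = a \/ A = b.
Proof. by move/set2P. Qed.

Lemma phi_max m (i : idx m) : is_maximal_matching (G m) (phi i).
Proof.
case: i => [[j t]|[[]|[l t]]] /=.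
- have hj := ltn_ord j; have ht := ltn_ord t.
  apply/maxP; split; first apply/matchingP; first split.
  + move=> A; move=> /in2P [] ->; apply/edgesP; (eexists _, _; split; [| |reflexivity]);
      rewrite /wa /wb /T1_33_base; case: t ht => [[|[|[|?]]] ?] //=; lia.
  + move=> A B; move=> /in2P [] -> /in2P [] ->; rewrite ?eqxx // => _;
      rewrite disjE /wa /wb; case: t ht => [[|[|[|?]]] ?] //=; lia.
  + move=> f /edgesP [c [d [hb hd ->]]]; apply: ex2_2; rewrite !disjE /wa /wb;
      case: t ht => [[|[|[|?]]] ?] //=; rewrite /T1_33_base in hb; lia.
- apply/maxP; split; first apply/matchingP; first split.
  + move=> A; move=> /in3P [] ->; apply/edgesP; (eexists _, _; split; [| |reflexivity]) => //.
  + move=> A B; move=> /in3P [] -> /in3P [] ->; rewrite ?eqxx // => _;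
      rewrite disjE //.
  + move=> f /edgesP [c [d [hb hd ->]]]; apply: ex2_3; rewrite !disjE //;
      rewrite /T1_33_base in hb; lia.
- have hl := ltn_ord l; have ht := ltn_ord t.
  apply/maxP; split; first apply/matchingP; first split.
  + move=> A; move=> /in3P [] ->; apply/edgesP; (eexists _, _; split; [| |reflexivity]);
      rewrite /wa /wb /T1_33_base; case: t ht => [[|[|[|?]]] ?] //=; lia.
  + move=> A B; move=> /in3P [] -> /in3P [] ->; rewrite ?eqxx // => _;
      rewrite disjE /wa /wb; case: t ht => [[|[|[|?]]] ?] //=; lia.
  + move=> f /edgesP [c [d [hb hd ->]]]; apply: ex2_3; rewrite !disjE /wa /wb;
      case: t ht => [[|[|[|?]]] ?] //=; rewrite /T1_33_base in hb; lia.
Qed.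

Lemma wab (t : 'I_3) : [/\ 3 <= wa t, wa t < wb t & wb t <= 5].
Proof. by rewrite /wa /wb; case: t => [[|[|[|?]]] ?]. Qed.

Lemma wa_inj (t t' : 'I_3) : wa t = wa t' -> wb t = wb t' -> t = t'.
Proof.
rewrite /wa /wb; case: t => [[|[|[|?]]] ?] //; case: t' => [[|[|[|?]]] ?] //= _ _;
  by apply: val_inj.
Qed.

Definition codes m (i : idx m) (a b : nat) : bool :=
  match i with
  | inl (j, t) => ((a == j) && (b == 2)) || ((a == wa t) && (b == wb t))
  | inr (inl _) => [|| (a == 2) && (b == 3), (a == 0) && (b == 1) | (a == 4) && (b == 5)]
  | inr (inr (l, t)) => [|| (a == 2) && (b == l + 6), (a == 0) && (b == 1) | (a == wa t) && (b == wb t)]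
  end.

Lemma mem_phi m (i : idx m) a b : a < b -> b < m.+4.+3 ->
  (E m a b \in phi i) = codes i a b.
Proof.
move=> hab hb.
case: i => [[j t]|[[]|[l t]]] /=; rewrite !inE ?eqE //;
  try (have := ltn_ord j); try (have := ltn_ord l); try (have [? ? ?] := wab t); try lia.
Qed.

Lemma phi_inj m : injective (@phi m).
Proof.
move=> i i' H.
have mem a b : a < b -> b < m.+4.+3 -> codes i a b -> codes i' a b.
  by move=> h1 h2; rewrite -!mem_phi // H.
case: i i' mem {H} => [[j t]|[[]|[l t]]] [[j' t']|[[]|[l' t']]] /= mem;
  try (have hj := ltn_ord j); try (have hj' := ltn_ord j');
  try (have hl := ltn_ord l); try (have hl' := ltn_ord l');
  try (have [ht0 ht1 ht2] := wab t); try (have [ht0' ht1' ht2'] := wab t').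
- have := mem j 2; have := mem (wa t) (wb t); rewrite !eqxx ?orbT.
  move=> h1 h2; have {h1} h1 := h1 ht1 ltac:(lia) isT; have {h2} h2 := h2 hj ltac:(lia) isT.
  have ej : j = j' by apply: val_inj => /=; lia.
  have et : t = t' by apply: wa_inj; lia.
  by rewrite ej et.
- have := mem j 2; rewrite !eqxx /= => h; have := h hj ltac:(lia) isT; lia.
- have := mem j 2; rewrite !eqxx /= => h; have := h hj ltac:(lia) isT; lia.
- have := mem 2 3; rewrite !eqxx /= => h; have := h isT ltac:(lia) isT; lia.
- by [].
- have := mem 2 3; rewrite !eqxx /= => h; have := h isT ltac:(lia) isT; lia.
- have := mem 2 (l + 6); rewrite !eqxx /= => h; have := h ltac:(lia) ltac:(lia) isT; lia.
- have := mem 2 (l + 6); rewrite !eqxx /= => h; have := h ltac:(lia) ltac:(lia) isT; lia.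
- have := mem 2 (l + 6); have := mem (wa t) (wb t); rewrite !eqxx ?orbT.
  move=> h1 h2; have {h1} h1 := h1 ht1 ltac:(lia) isT; have {h2} h2 := h2 ltac:(lia) ltac:(lia) isT.
  have el : l = l' by apply: val_inj => /=; lia.
  have et : t = t' by apply: wa_inj; lia.
  by rewrite el et.
Qed.

Lemma inM m M A : is_maximal_matching (G m) M -> A \in M ->
  exists p q, [/\ T1_33_base p q, q < m.+4.+3 & A = E m p q].
Proof. by case/maxP => /matchingP [hs _] _ /hs /edgesP. Qed.

Lemma cover m M : is_maximal_matching (G m) M -> forall c d, T1_33_base c d -> d < m.+4.+3 ->
  exists a b, [/\ T1_33_base a b, b < m.+4.+3, E m a b \in M &
     ~~ [&& a != c, a != d, b != c & b != d]].
Proof.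
move=> hM c d hcd hd; have hc : c < m.+4.+3 by have := base_lt hcd; lia.
case/maxP: (hM) => _ hf; case: (hf (E m c d)); first by apply/edgesP; exists c, d.
move=> A AM; have [p [q [hp hq eA]]] := inM hM AM.
have hp' : p < m.+4.+3 by have := base_lt hp; lia.
rewrite eA disjE // => h; exists p, q; split => //; rewrite -eA //.
Qed.

Lemma pairM m M a b c d : is_maximal_matching (G m) M ->
  T1_33_base a b -> T1_33_base c d -> b < m.+4.+3 -> d < m.+4.+3 ->
  E m a b \in M -> E m c d \in M ->
  ((a == c) && (b == d)) || [&& a != c, a != d, b != c & b != d].
Proof.
move=> hM hab hcd hb hd hA hB.
have ha := base_lt hab; have hc := base_lt hcd.
case/maxP: hM => /matchingP [_ hdisj] _.
case E1: ((a == c) && (b == d)) => //=.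
rewrite -(@disjE m); try lia.
apply: hdisj => //; rewrite eqE //; try lia.
Qed.

Lemma ext m M (i : idx m) : is_maximal_matching (G m) M ->
  (forall p q, T1_33_base p q -> q < m.+4.+3 -> (E m p q \in M) = codes i p q) -> M = phi i.
Proof.
move=> hM H; apply/setP => A; apply/idP/idP => hA.
- have [p [q [hp hq eA]]] := inM hM hA; subst A.
  by rewrite mem_phi ?(base_lt hp) // -H.
- have [p [q [hp hq eA]]] := inM (phi_max i) hA; subst A.
  by rewrite H // -mem_phi ?(base_lt hp).
Qed.

Lemma wsurj c d : T1_33_base c d -> 3 <= c -> exists t : 'I_3, wa t = c /\ wb t = d.
Proof.
rewrite /T1_33_base => h h3.
have : (c = 3 /\ d = 4) \/ (c = 3 /\ d = 5) \/ (c = 4 /\ d = 5) by lia.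
case => [[-> ->]|[[-> ->]|[-> ->]]].
- by exists (@Ordinal 3 0 isT).
- by exists (@Ordinal 3 1 isT).
- by exists (@Ordinal 3 2 isT).
Qed.

Lemma wcases c d : T1_33_base c d -> 3 <= c ->
  (c = 3 /\ d = 4) \/ (c = 3 /\ d = 5) \/ (c = 4 /\ d = 5).
Proof. rewrite /T1_33_base; lia. Qed.

Lemma classify m M : is_maximal_matching (G m) M -> exists i : idx m, M = phi i.
Proof.
move=> hM.
have [a [b [hab hb hA hmt]]] := cover hM (c:=2) (d:=6) isT ltac:(lia).
have : (a = 0 /\ b = 2) \/ (a = 1 /\ b = 2) \/ (a = 2 /\ b = 3) \/ (a = 2 /\ 6 <= b).
  by clear -hab hmt; rewrite /T1_33_base in hab; lia.
case => [[ea eb]|[[ea eb]|[[ea eb]|[ea hb6]]]].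
- subst a b.
  have [c [d [hcd hd hC hmt2]]] := cover hM (c:=3) (d:=4) isT ltac:(lia).
  have hp := pairM hM hab hcd hb hd hA hC.
  have hc3 : 3 <= c by clear -hcd hp hmt2; rewrite /T1_33_base in hcd; lia.
  have [t [wt1 wt2]] := wsurj hcd hc3.
  exists (inl (@Ordinal 2 0 isT, t)).
  apply: ext => // p q hpq hq /=; rewrite wt1 wt2; clear wt1 wt2.
  apply/idP/idP => [h|]; last by case/orP => /andP [/eqP -> /eqP ->].
  have h1 := pairM hM hpq hab hq hb h hA; have h2 := pairM hM hpq hcd hq hd h hC.
  case: (wcases hcd hc3) => [[ec ed]|[[ec ed]|[ec ed]]]; subst c d;
  clear -h1 h2 hpq; rewrite /T1_33_base in hpq; lia.
- subst a b.
  have [c [d [hcd hd hC hmt2]]] := cover hM (c:=3) (d:=4) isT ltac:(lia).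
  have hp := pairM hM hab hcd hb hd hA hC.
  have hc3 : 3 <= c by clear -hcd hp hmt2; rewrite /T1_33_base in hcd; lia.
  have [t [wt1 wt2]] := wsurj hcd hc3.
  exists (inl (@Ordinal 2 1 isT, t)).
  apply: ext => // p q hpq hq /=; rewrite wt1 wt2; clear wt1 wt2.
  apply/idP/idP => [h|]; last by case/orP => /andP [/eqP -> /eqP ->].
  have h1 := pairM hM hpq hab hq hb h hA; have h2 := pairM hM hpq hcd hq hd h hC.
  case: (wcases hcd hc3) => [[ec ed]|[[ec ed]|[ec ed]]]; subst c d;
  clear -h1 h2 hpq; rewrite /T1_33_base in hpq; lia.
- subst a b.
  have [c [d [hcd hd hC hmt2]]] := cover hM (c:=0) (d:=1) isT ltac:(lia).
  have hp := pairM hM hab hcd hb hd hA hC.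
  have [ec ed] : c = 0 /\ d = 1 by clear -hcd hp hmt2; rewrite /T1_33_base in hcd; lia.
  subst c d.
  have [c [d [hcd2 hd2 hC2 hmt3]]] := cover hM (c:=4) (d:=5) isT ltac:(lia).
  have hp1 := pairM hM hab hcd2 hb hd2 hA hC2.
  have hp2 := pairM hM hcd hcd2 hd hd2 hC hC2.
  have [ec ed] : c = 4 /\ d = 5 by clear -hcd2 hp1 hp2 hmt3; rewrite /T1_33_base in hcd2; lia.
  subst c d.
  exists (inr (inl tt)).
  apply: ext => // p q hpq hq /=.
  apply/idP/idP => [h|]; last by case/or3P => /andP [/eqP -> /eqP ->].
  have h1 := pairM hM hpq hab hq hb h hA; have h2 := pairM hM hpq hcd hq hd h hC.
  have h3 := pairM hM hpq hcd2 hq hd2 h hC2.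
  clear -h1 h2 h3 hpq; rewrite /T1_33_base in hpq; lia.
- subst a.
  have [c [d [hcd hd hC hmt2]]] := cover hM (c:=0) (d:=1) isT ltac:(lia).
  have hp := pairM hM hab hcd hb hd hA hC.
  have [ec ed] : c = 0 /\ d = 1 by clear -hcd hp hmt2 hb6; rewrite /T1_33_base in hcd; lia.
  subst c d.
  have [c [d [hcd2 hd2 hC2 hmt3]]] := cover hM (c:=3) (d:=4) isT ltac:(lia).
  have hp1 := pairM hM hab hcd2 hb hd2 hA hC2.
  have hp2 := pairM hM hcd hcd2 hd hd2 hC hC2.
  have hc3 : 3 <= c by clear -hcd2 hp1 hp2 hmt3 hb6; rewrite /T1_33_base in hcd2; lia.
  have [t [wt1 wt2]] := wsurj hcd2 hc3.
  have hl : b - 6 < m.+1 by lia.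
  exists (inr (inr (Ordinal hl, t))).
  apply: ext => // p q hpq hq /=; rewrite wt1 wt2; clear wt1 wt2.
  have e6 : b - 6 + 6 = b by lia.
  rewrite e6.
  apply/idP/idP => [h|]; last by case/or3P => /andP [/eqP -> /eqP ->].
  have h1 := pairM hM hpq hab hq hb h hA; have h2 := pairM hM hpq hcd hq hd h hC.
  have h3 := pairM hM hpq hcd2 hq hd2 h hC2.
  case: (wcases hcd2 hc3) => [[ec ed]|[[ec ed]|[ec ed]]]; subst c d;
  clear -h1 h2 h3 hpq hb6; rewrite /T1_33_base in hpq; lia.
Qed.

Lemma card_phi m (i : idx m) : #|phi i| = if i is inl _ then 2 else 3.
Proof.
case: i => [[j t]|[[]|[l t]]] /=.
- have hj := ltn_ord j; have [h1 h2 h3] := wab t.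
  rewrite cards2 eqE //; try lia.
- rewrite setUC cardsU1 cards2 !inE !eqE //.
- have hl := ltn_ord l; have [h1 h2 h3] := wab t.
  rewrite setUC cardsU1 cards2 !inE !eqE //; try lia.
Qed.

Lemma sum_count m :
  (\sum_(i in [set: idx m]) #|phi i| = 9 * m + 24)%N /\ #|[set: idx m]| = (3 * m + 10)%N.
Proof.
split; last by rewrite cardsT card_sum card_prod !card_ord card_sum card_unit card_prod !card_ord; lia.
rewrite (eq_bigr (fun i => if i is inl _ then 2 else 3)%N); last by move=> i _; rewrite card_phi.
rewrite !big_sumType /=.
under eq_bigl do rewrite in_setT.
under [X in _ + (X + _)]eq_bigl do rewrite in_setT.
under [X in _ + (_ + X)]eq_bigl do rewrite in_setT.
rewrite !sum_nat_const card_prod !card_ord card_unit card_prod !card_ord; lia.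
Qed.


Import GRing.Theory Num.Theory.
Local Open Scope ring_scope.

Theorem lemma4p1 (n : nat) (hn : (7 <= n)%N) :
  avm (T1_33 n) = 3 - 6 / (3 * n%:R - 11).
Proof.
have [m ->] : exists m, n = m.+4.+3 by exists (n - 7)%N; lia.
have hset : [set M | is_maximal_matching (G m) M] = (@phi m) @: [set: idx m].
  apply/setP => M; rewrite inE; apply/idP/imsetP.
  - by case/classify => i ->; exists i.
  - by case=> i _ ->; exact: phi_max.
have [hs hc] := sum_count m.
rewrite /avm hset.
rewrite (eq_bigl (fun M => M \in (@phi m) @: [set: idx m])); last by move=> M; rewrite -hset inE.
rewrite big_imset /=; last by move=> x y _ _; exact: phi_inj.
rewrite hs card_imset; last exact: phi_inj.
rewrite hc.
have h0 : ((3 * m + 10)%N%:R : rat) != 0 by rewrite pnatr_eq0; lia.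
have -> : (3 * (m.+4.+3)%:R - 11 : rat) = (3 * m + 10)%N%:R.
  rewrite (_ : m.+4.+3 = m + 7)%N; last by lia.
  ring.
field.
by move: h0; rewrite natrD natrM.
Qed.
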